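(* Let $n\ge2$. If ${\rm Comp}(\mathbb{Z}_n)\subseteq\{0,1,2,3\}$ and $p$ is an odd prime, then $n$ is not divisible by $p^3$.
   Context: $\mathbb{Z}_n$ is the cyclic group of integers modulo $n$. A skew morphism of a finite group $G$ is a permutation $\varphi$ of $G$ fixing the identity such that for each $a\in G$ there is a non-negative integer $i_a$ with $\varphi(ab)=\varphi(a)\varphi^{i_a}(b)$ for all $b\in G$. ${\rm ord}(\varphi)$ is the order of $\langle\varphi\rangle$. If $\varphi$ is non-trivial, $\pi_\varphi(a)$ is the unique such $i_a\in\{1,\dots,{\rm ord}(\varphi)-1\}$; if $\varphi$ is the identity, $\pi_\varphi(a)=1$. Let $\sigma_\varphi(x,y)=\sum_{i=0}^{x-1}\pi_\varphi(\varphi^i(y))\in\mathbb{Z}_{{\rm ord}(\varphi)}$. The derived skew morphism $\varphi'$ of a skew morphism $\varphi$ of $\mathbb{Z}_n$ is the skew morphism of $\mathbb{Z}_{{\rm ord}(\varphi)}$ given by $\varphi'(a)=\sigma_\varphi(a,1)$. Set $\varphi^{(0)}=\varphi$, $\varphi^{(i+1)}=(\varphi^{(i)})'$. For $n\ge 2$ the complexity of $\varphi$ is the unique non-negative integer $c$ such that $\varphi^{(c)}$ is a skew morphism of a non-trivial cyclic group and $\varphi^{(c+1)}$ is a skew morphism of $\mathbb{Z}_1$. ${\rm Comp}(\mathbb{Z}_n)$ denotes the set of complexities of all skew morphisms of $\mathbb{Z}_n$. *)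

(* Defs.v *)
(* MathComp (boot) world.  Z_n is modelled as {0,...,n-1} inside nat with
   addition (a + b) %% n; a map of Z_n is a function nat -> nat of which only
   the values on {0,...,n-1} matter. *)
From mathcomp Require Import all_boot.
Set Implicit Arguments. Unset Strict Implicit. Unset Printing Implicit Defensive.

Definition is_skew (n : nat) (f : nat -> nat) : Prop :=
  [/\ 0 < n,
      (forall a, a < n -> f a < n),
      (forall a b, a < n -> b < n -> f a = f b -> a = b),
      f 0 = 0
    & forall a, a < n -> exists i : nat,
        forall b, b < n -> f ((a + b) %% n) = (f a + iter i f b) %% n].

(* ord(phi): the least k >= 1 with phi^k = id on Z_n.  (A permutation of an
   n-element set has order <= n`!, so the search range is sufficient.) *)
Definition skew_ord (n : nat) (f : nat -> nat) : nat :=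
  find (fun k => (0 < k) && all (fun x => iter k f x == x) (iota 0 n))
       (iota 0 (n`!).+1).

Definition is_identity (n : nat) (f : nat -> nat) : bool :=
  all (fun x => f x == x) (iota 0 n).

Definition skew_pi (n : nat) (f : nat -> nat) (a : nat) : nat :=
  if is_identity n f then 1
  else find (fun i => (0 < i) &&
               all (fun b => f ((a + b) %% n) == (f a + iter i f b) %% n)
                   (iota 0 n))
            (iota 0 (skew_ord n f)).

Definition skew_sigma (n : nat) (f : nat -> nat) (x y : nat) : nat :=
  (\sum_(i < x) skew_pi n f (iter i f y)) %% skew_ord n f.

Definition derived (p : nat * (nat -> nat)) : nat * (nat -> nat) :=
  (skew_ord p.1 p.2, fun a => skew_sigma p.1 p.2 a (1 %% p.1)).

(* c is the complexity of phi : phi^(c) is a skew morphism of a non-trivial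
   cyclic group and phi^(c+1) is a skew morphism of Z_1. *)
Definition is_complexity (n : nat) (f : nat -> nat) (c : nat) : Prop :=
  1 < (iter c derived (n, f)).1 /\ (iter c.+1 derived (n, f)).1 = 1.

Definition Comp (n : nat) : nat -> Prop :=
  fun c => exists f, is_skew n f /\ is_complexity n f c.

(* Main.v *)
Require Import Defs.
From mathcomp Require Import all_boot all_algebra zify ring.
From Stdlib Require Import FunctionalExtensionality.
Set Implicit Arguments. Unset Strict Implicit. Unset Printing Implicit Defensive.
Import GRing.Theory.

Lemma find_iota_exact (P : pred nat) K m :
  m < K -> P m -> (forall k, k < m -> ~~ P k) -> find P (iota 0 K) = m.
Proof.
move=> mK Pm Hb.
have -> : iota 0 K = iota 0 m ++ iota m (K - m).
  by rewrite -iotaD subnKC // ltnW.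
rewrite find_cat.
have -> : has P (iota 0 m) = false.
  apply/hasPn => k; rewrite mem_iota add0n => /andP[_ km]; exact: Hb.
rewrite size_iota.
have -> : K - m = (K - m).-1.+1 by rewrite prednK // subn_gt0.
by rewrite /= Pm addn0.
Qed.

Lemma find_pi_mod (Q : pred nat) m k : 0 < m ->
  (forall i, i < m -> Q i = (0 < i) && (i %% m == k %% m)) ->
  find Q (iota 0 m) %% m = k %% m.
Proof.
move=> m0 HQ.
have [k0|kn0] := eqVneq (k %% m) 0.
  have -> : find Q (iota 0 m) = m.
    have : ~~ has Q (iota 0 m).
      apply/hasPn => i; rewrite mem_iota add0n => /andP[_ im].
      rewrite HQ // k0 modn_small //; by case: i im.
    rewrite has_find size_iota -leqNgt => h.
    by apply/eqP; rewrite eqn_leq h (leq_trans (find_size _ _)) ?size_iota.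
  by rewrite modnn k0.
rewrite (@find_iota_exact _ m (k %% m)) ?ltn_pmod //.
- by rewrite modn_mod.
- by rewrite HQ ?ltn_pmod // lt0n kn0 modn_mod eqxx.
move=> i ik; rewrite HQ ?(ltn_trans ik) ?ltn_pmod // modn_small ?(ltn_trans ik) ?ltn_pmod //.
by rewrite (ltn_eqF ik) andbF.
Qed.

Lemma iter_eq_in n (g h : nat -> nat) :
  (forall x, x < n -> g x = h x) -> (forall x, x < n -> g x < n) ->
  forall k x, x < n -> iter k g x = iter k h x /\ iter k g x < n.
Proof.
move=> gh gr; have hr0 : forall x, x < n -> h x < n by move=> x xn; rewrite -gh ?gr.
elim=> [|k IH] x xn //=.
have [e lt] := IH x xn; rewrite e in lt *; split; [by rewrite gh | by rewrite gh // hr0].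
Qed.

Lemma derived_eq_in n (g h : nat -> nat) :
  (forall x, x < n -> g x = h x) -> (forall x, x < n -> g x < n) ->
  derived (n, g) = derived (n, h).
Proof.
case: n => [|n'] gh gr.
  by rewrite /derived /skew_sigma /skew_pi /skew_ord /is_identity /=.
set n := n'.+1.
have n0 : 0 < n by [].
have It := iter_eq_in gh gr.
have hr : forall x, x < n -> h x < n by move=> x xn; rewrite -gh ?gr.
have Eo : skew_ord n g = skew_ord n h.
  rewrite /skew_ord; congr find; apply: functional_extensionality => k; congr andb.
  apply: eq_in_all => x; rewrite mem_iota add0n => /andP[_ xn].
  by rewrite (It k x xn).1.
have Ei : is_identity n g = is_identity n h.
  apply: eq_in_all => x; rewrite mem_iota add0n => /andP[_ xn]; by rewrite gh.
have Ep : forall x, x < n -> skew_pi n g x = skew_pi n h x.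
  move=> x xn; rewrite /skew_pi Ei Eo; case: ifP => // _.
  congr find; apply: functional_extensionality => i; congr andb.
  apply: eq_in_all => y; rewrite mem_iota add0n => /andP[_ yn].
  rewrite !gh ?(It i y yn).1 //.
  by rewrite ltn_pmod.
rewrite /derived /=; congr pair => //.
apply: functional_extensionality => a; rewrite /skew_sigma Eo; congr modn.
apply: eq_bigr => i _.
have y1 : 1 %% n < n by rewrite ltn_pmod.
rewrite (It i _ y1).1 Ep //; by rewrite -(It i _ y1).1 (It i _ y1).2.
Qed.

Section Fam.
Variables p c : nat.
Hypothesis Hp : prime p.
Hypothesis Hodd : odd p.
Hypothesis Hcp : coprime p c.

Definition aa := 1 + p * c.
Definition bb := p * c.
Definition Sa k := \sum_(i < k) aa ^ i.

Lemma SaS k : Sa k.+1 = Sa k + aa ^ k.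
Proof. by rewrite /Sa big_ord_recr. Qed.

Lemma Sa0 : Sa 0 = 0. Proof. by rewrite /Sa big_ord0. Qed.
Lemma Sa1 : Sa 1 = 1. Proof. by rewrite SaS Sa0. Qed.

Lemma SaD k l : Sa (k + l) = Sa k + aa ^ k * Sa l.
Proof.
elim: l => [|l IH]; first by rewrite Sa0 addn0 muln0 addn0.
by rewrite addnS !SaS IH mulnDr -expnD addnA.
Qed.

Lemma expa k : aa ^ k = 1 + bb * Sa k.
Proof.
elim: k => [|k IH]; first by rewrite Sa0 muln0.
rewrite SaS expnS IH /aa /bb; ring.
Qed.

Lemma Sa_gt0 k : 0 < k -> 0 < Sa k.
Proof. case: k => // k _; by rewrite SaS addn_gt0 expn_gt0 /aa orbT. Qed.

Lemma Sa_mod d k : d %| bb -> Sa k = k %[mod d].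
Proof.
move=> db; elim: k => [|k IH]; first by rewrite Sa0.
rewrite SaS expa addnA -modnDmr (_ : bb * Sa k %% d = 0); last first.
  by apply/eqP; change (d %| bb * Sa k); rewrite dvdn_mulr.
by rewrite addn0 -modnDml IH modnDml addn1.
Qed.

Lemma SaM k q : Sa (k * q) = Sa k * \sum_(i < q) (aa ^ k) ^ i.
Proof.
elim: q => [|q IH]; first by rewrite muln0 big_ord0 Sa0 muln0.
rewrite mulnS addnC SaD IH big_ord_recr /= mulnDr -expnM; ring.
Qed.

Lemma p_gt1 : 1 < p. Proof. exact: prime_gt1. Qed.

Lemma pow_p2 t i : exists X, (1 + p * t) ^ i = 1 + i * p * t + p ^ 2 * X.
Proof.
elim: i => [|i [X IH]]; first by exists 0; rewrite expn0 mul0n muln0.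
exists (i * t * t + X + X * p * t); rewrite expnS IH; ring.
Qed.

Lemma sum_p2 t q : exists Y,
  \sum_(i < q) (1 + p * t) ^ i = q + p * t * 'C(q, 2) + p ^ 2 * Y.
Proof.
elim: q => [|q [Y IH]]; first by exists 0; rewrite big_ord0 muln0 addn0 bin_small ?muln0.
have [X hX] := pow_p2 t q.
exists (Y + X); rewrite big_ord_recr /= IH hX binS bin1; ring.
Qed.

Lemma sum_mod_p2 t : \sum_(i < p) (1 + p * t) ^ i = p %[mod p ^ 2].
Proof.
have [Y ->] := sum_p2 t p.
have p2 : 2 < p.
  rewrite ltn_neqAle p_gt1 andbT; apply/eqP => e; move: Hodd; by rewrite -e.
have /dvdnP[z ez] : p %| 'C(p, 2) by apply: prime_dvd_bin => //; apply/andP; split.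
rewrite ez (_ : p * t * (z * p) = p ^ 2 * (t * z)); last by ring.
by rewrite -addnA -mulnDr addnC mulnC modnMDl.
Qed.

Lemma sum_pow_gt0 x q : 0 < q -> 0 < \sum_(i < q) x ^ i.
Proof. by case: q => // q _; rewrite big_ord_recl expn0 addSn. Qed.

Lemma logn_T t : logn p (\sum_(i < p) (1 + p * t) ^ i) = 1.
Proof.
set T := \sum_(i < p) _.
have T0 : 0 < T by rewrite sum_pow_gt0 ?prime_gt0.
have hm : T %% p ^ 2 = p.
  rewrite sum_mod_p2 modn_small // -{1}(expn1 p) ltn_exp2l //; exact: p_gt1.
have d1 : p ^ 1 %| T.
  rewrite expn1 /dvdn -(modn_dvdm _ (dvdn_exp2l p (isT : 1 <= 2))) hm modnn //.
have d2 : ~~ (p ^ 2 %| T).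
  rewrite /dvdn hm; apply/negP => /eqP p0; move: Hp; by rewrite p0.
rewrite pfactor_dvdn // in d1; rewrite pfactor_dvdn // in d2.
by apply/eqP; rewrite eqn_leq d1 andbT -ltnS ltnNge.
Qed.

Lemma logn_Sa k : 0 < k -> logn p (Sa k) = logn p k.
Proof.
elim: k {-2}k (leqnn k) => [|K IH] k kK k0; first by case: k kK k0.
have [pk|npk] := boolP (p %| k); last first.
  rewrite !logn_coprime // prime_coprime //.
  by rewrite /dvdn Sa_mod ?dvdn_mulr // -/(dvdn p k).
move: pk => /dvdnP[k1 ek]; subst k.
have k10 : 0 < k1 by move: k0; rewrite muln_gt0 => /andP[].
have pg := p_gt1.
rewrite SaM lognM; [|exact: Sa_gt0|exact: sum_pow_gt0 (prime_gt0 Hp)].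
rewrite IH //; last by nia.
by rewrite expa /bb -mulnA logn_T (lognM _ k10 (prime_gt0 Hp)) (logn_prime p Hp) eqxx addn1.
Qed.


Lemma cop_pM M : M %| c -> coprime p M.
Proof. move=> hM; exact: coprime_dvdr hM Hcp. Qed.

Lemma M_bb M : M %| c -> M %| bb.
Proof. by move=> hM; rewrite /bb dvdn_mull. Qed.

Lemma Reg f M k : M %| c -> (p ^ f * M %| Sa k) = (p ^ f * M %| k).
Proof.
move=> hM; rewrite !Gauss_dvd ?coprimeXl ?cop_pM //; congr andb.
  case: k => [|k]; first by rewrite Sa0.
  by rewrite !pfactor_dvdn ?Sa_gt0 ?logn_Sa.
by rewrite /dvdn Sa_mod ?M_bb.
Qed.

Lemma cop_1b f M z : M %| c -> coprime (p ^ f * M) (1 + bb * z).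
Proof.
move=> hM; rewrite coprimeMl coprimeXl //=.
  have /dvdnP[t et] := M_bb hM.
  by rewrite /coprime et mulnAC addnC gcdnMDl gcdn1.
by rewrite /coprime /bb -mulnA mulnC addnC gcdnMDl gcdn1.
Qed.

Lemma cop_a f M : M %| c -> coprime (p ^ f * M) aa.
Proof. move=> hM; have := cop_1b f 1 hM; by rewrite muln1. Qed.

Lemma N_gt0 f M : M %| c -> 0 < p ^ f * M.
Proof.
move=> hM; rewrite muln_gt0 expn_gt0 prime_gt0 //=.
by apply: dvdn_gt0 hM; case: c Hcp => //; rewrite /coprime gcdn0 => /eqP pe; move: Hp; rewrite pe.
Qed.

Lemma Inj f M i j : M %| c -> i < p ^ f * M -> j < p ^ f * M ->
  Sa i = Sa j %[mod p ^ f * M] -> i = j.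
Proof.
move=> hM; wlog ij : i j / i <= j.
  move=> H iN jN e; have [ij|ji] := leqP i j; first exact: H.
  by symmetry; apply: H => //; apply: ltnW.
move=> iN jN; rewrite -(subnKC ij) SaD -{1}(addn0 (Sa i)) => /eqP.
rewrite eqn_modDl eq_sym -/(dvdn _ _) => /eqP; rewrite mod0n => /eqP.
rewrite -/(dvdn _ _) Gauss_dvdr ?coprimeXr ?cop_a // Reg // => d.
have : j - i < p ^ f * M by apply: leq_ltn_trans (leq_subr _ _) jN.
case e: (j - i) d => [|q] d lt; first by rewrite addn0.
by move: (dvdn_leq (isT : 0 < q.+1) d); rewrite leqNgt lt.
Qed.

Lemma Surj f M v : M %| c -> exists2 k, k < p ^ f * M & Sa k = v %[mod p ^ f * M].
Proof.
move=> hM; set N := p ^ f * M; have N0 : 0 < N by exact: N_gt0.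
pose g (k : 'I_N) : 'I_N := Ordinal (ltn_pmod (Sa k) N0).
have gi : injective g.
  move=> x y /(congr1 val) /= e; apply: val_inj; exact: (Inj hM (ltn_ord x) (ltn_ord y) e).
have [h gh hg] := injF_bij gi.
exists (h (Ordinal (ltn_pmod v N0))) => //.
by have := congr1 val (hg (Ordinal (ltn_pmod v N0))) => /= ->.
Qed.

Definition phi N u i := find (fun k => Sa k == u * Sa i %[mod N]) (iota 0 N).

Lemma phiP f M u i : M %| c ->
  phi (p ^ f * M) u i < p ^ f * M /\ Sa (phi (p ^ f * M) u i) = u * Sa i %[mod p ^ f * M].
Proof.
move=> hM; set N := p ^ f * M.
have [k kN ek] := Surj f (u * Sa i) hM.
have hs : has (fun k => Sa k == u * Sa i %[mod N]) (iota 0 N).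
  by apply/hasP; exists k; rewrite ?mem_iota ?ek.
have := hs; rewrite has_find size_iota => lt; split => //.
have := nth_find 0 hs; rewrite nth_iota // add0n => /eqP //.
Qed.

Lemma p_odd2 : coprime p 2.
Proof.
rewrite prime_coprime //; apply/negP => /(dvdn_leq (isT : 0 < 2)) le.
have e : p = 2 by apply/eqP; rewrite eqn_leq le p_gt1.
by move: Hodd; rewrite e.
Qed.

Definition uu f M := (p ^ f * M).-1 * aa.

Section Lev.
Variables (f M : nat).
Hypotheses (hM : M %| c) (hf : 0 < f).
Local Notation N := (p ^ f * M).
Local Notation R := ('Z_(p ^ f * M)).
Local Open Scope ring_scope.

Lemma N_gt1 : (1 < N)%N.
Proof.
have M0 : (0 < M)%N by have := N_gt0 0 hM; rewrite expn0 mul1n.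
apply: (leq_trans p_gt1); apply: leq_trans (leq_pmulr _ M0).
by rewrite -{1}(expn1 p) leq_pexp2l // prime_gt0.
Qed.

Lemma natZ x y : ((x%:R : R) == y%:R) = (x == y %[mod N])%N.
Proof. by rewrite -val_eqE /= !val_Zp_nat // N_gt1. Qed.

Lemma natZ0 x : ((x%:R : R) == 0) = (N %| x)%N.
Proof. by rewrite -val_eqE /= val_Zp_nat // N_gt1. Qed.

Local Notation Ar := (aa%:R : R).
Local Notation Br := (bb%:R : R).
Local Notation Ur := ((uu f M)%:R : R).
Local Notation Sr k := ((Sa k)%:R : R).

Lemma Ur_def : Ur = - Ar.
Proof.
have e : (N.-1)%:R = - 1 :> R.
  apply/eqP; rewrite -subr_eq0 opprK natr1 prednK ?(ltnW N_gt1) //.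
  by rewrite pchar_Zp // N_gt1.
by rewrite /uu natrM e mulN1r.
Qed.

Lemma ArE : Ar = 1 + Br.
Proof. by rewrite /aa natrD. Qed.

Lemma ArX k : Ar ^+ k = 1 + Br * Sr k.
Proof. by rewrite -natrX expa natrD natrM. Qed.

Lemma SrD k l : Sr (k + l) = Sr k + Ar ^+ k * Sr l.
Proof. by rewrite SaD natrD natrM natrX. Qed.

Lemma SrS k : Sr k.+1 = Sr k + Ar ^+ k.
Proof. by rewrite SaS natrD natrX. Qed.

Lemma Sr1 : Sr 1 = 1.
Proof. by rewrite Sa1. Qed.

Lemma Sr_dvd k : (N %| k)%N -> Sr k = 0.
Proof.
move=> d; apply/eqP; by rewrite natZ0 Reg.
Qed.

Lemma ArN : Ar ^+ N = 1.
Proof. by rewrite ArX Sr_dvd ?mulr0 ?addr0. Qed.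

Lemma Sr_mod k : Sr (k %% N) = Sr k.
Proof.
have h1 : Sr (k %/ N * N) = 0 by apply: Sr_dvd; apply: dvdn_mull.
have h2 : Ar ^+ (k %/ N * N) = 1 by rewrite ArX h1 mulr0 addr0.
by rewrite {2}(divn_eq k N) SrD h1 h2 mul1r add0r.
Qed.

Lemma Br_unit (z : R) : (1 + Br * z) \is a GRing.unit.
Proof.
rewrite -(natr_Zp z) -natrM nat1r -add1n unitZpE ?N_gt1 //.
exact: cop_1b.
Qed.

Lemma Ar_unit : Ar \is a GRing.unit.
Proof. by rewrite ArE -[Br]mulr1 Br_unit. Qed.

Lemma Ur_unit : Ur \is a GRing.unit.
Proof. by rewrite Ur_def unitrN Ar_unit. Qed.

Lemma Ndvd_b x : (N %| bb * x)%N = (p ^ f.-1 %| x)%N.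
Proof.
rewrite /bb -{1}(prednK hf) expnS -mulnA -mulnA dvdn_pmul2l ?prime_gt0 //.
rewrite Gauss_dvd ?coprimeXl ?cop_pM // (dvdn_trans hM (dvdn_mulr _ (dvdnn c))) andbT.
by rewrite Gauss_dvdr // coprimeXl.
Qed.

Lemma BrZ x : (Br * x%:R == 0 :> R) = (p ^ f.-1 %| x)%N.
Proof.
by rewrite -natrM natZ0 Ndvd_b.
Qed.

Lemma cop_1a : coprime p (1 + aa).
Proof.
rewrite /aa addnA /coprime (mulnC p c) addnC gcdnMDl.
by have := p_odd2; rewrite /coprime.
Qed.

Lemma L1 (Y : R) : Br * Y * (1 + Ar) = 0 -> Br * Y = 0.
Proof.
move=> h.
have : Br * (nat_of_ord Y * (1 + aa))%:R == 0.
  by rewrite natrM natrD mulr1n natr_Zp mulrA h.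
rewrite BrZ Gauss_dvdl ?coprimeXl ?cop_1a // => d.
by apply/eqP; rewrite -(natr_Zp Y) BrZ.
Qed.

Lemma Ar_ord k : (Ar ^+ k == 1) = (p ^ f.-1 %| k)%N.
Proof.
rewrite ArX -[X in _ == X](addr0 1) (inj_eq (addrI 1)) BrZ.
by have := Reg (f.-1) k (dvd1n c); rewrite !muln1.
Qed.

Definition mm := (2 * p ^ f.-1)%N.

Lemma Ur_ord k : (Ur ^+ k == 1) = (mm %| k)%N.
Proof.
rewrite Ur_def exprNn -signr_odd /mm Gauss_dvd ?coprimeXr ?coprime2n //.
case: (boolP (odd k)) => ok.
  rewrite /dvdn modn2 ok /= expr1 mulN1r.
  apply/negP => /eqP e.
  have h0 : Ar ^+ k + 1 = 0 by rewrite -(opprK (Ar ^+ k)) e addNr.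
  have e2 : ((2 + bb * Sa k)%:R : R) = Ar ^+ k + 1.
    by rewrite ArX natrD natrM; ring.
  have : ((2 + bb * Sa k)%:R : R) == 0 by rewrite e2 h0.
  rewrite natZ0 => d.
  have pN : (p %| N)%N by rewrite dvdn_mulr // -{1}(prednK hf) expnS dvdn_mulr.
  have := dvdn_trans pN d; rewrite dvdn_addl /bb -?mulnA ?dvdn_mulr //.
  by have := p_odd2; rewrite prime_coprime // => /negbTE ->.
rewrite /dvdn modn2 (negbTE ok) /= expr0 mul1r Ar_ord.
by [].
Qed.

Lemma expr_inj (x : R) m' i j : (forall k, (x ^+ k == 1) = (m' %| k)%N) ->
  x \is a GRing.unit -> x ^+ i = x ^+ j -> (i = j %[mod m'])%N.
Proof.
move=> H xu; wlog ij : i j / (i <= j)%N.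
  move=> W e; have [ij|ji] := leqP i j; first exact: W.
  by symmetry; apply: W => //; apply: ltnW.
rewrite -(subnKC ij) exprD -{1}(mulr1 (x ^+ i)) => /(mulrI (unitrX i xu)) /esym/eqP.
rewrite H => d; apply/eqP; rewrite eq_sym eqn_mod_dvd ?leq_addr //.
by rewrite addKn.
Qed.

Lemma expr_modeq (x : R) m' i j : x ^+ m' = 1 -> (i = j %[mod m'])%N -> x ^+ i = x ^+ j.
Proof. by move=> xm e; rewrite -(expr_mod i xm) e expr_mod. Qed.

Lemma mm_gt1 : (1 < mm)%N.
Proof. have h : (0 < p ^ f.-1)%N by rewrite expn_gt0 prime_gt0. rewrite /mm; lia. Qed.

Lemma Urm : Ur ^+ mm = 1.
Proof. by apply/eqP; rewrite Ur_ord. Qed.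

Local Notation ph := (phi N (uu f M)).

Lemma ph_lt i : (ph i < N)%N.
Proof. by case: (@phiP f M (uu f M) i hM). Qed.

Lemma phZ i : Sr (ph i) = Ur * Sr i.
Proof.
case: (@phiP f M (uu f M) i hM) => _ e; apply/eqP; by rewrite -natrM natZ e.
Qed.

Lemma iter_ph j i : Sr (iter j ph i) = Ur ^+ j * Sr i.
Proof. elim: j => [|j IH] /=; first by rewrite mul1r. by rewrite phZ IH exprS mulrA. Qed.

Lemma iter_ph_lt j i : (i < N)%N -> (iter j ph i < N)%N.
Proof. by case: j => [|j] //= _; exact: ph_lt. Qed.

Lemma SrI i j : (i < N)%N -> (j < N)%N -> Sr i = Sr j -> i = j.
Proof. move=> iN jN /eqP; rewrite natZ => /eqP; exact: Inj. Qed.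

Lemma Ur_s : Ur ^+ (1 + p ^ f.-1) = Ar.
Proof.
rewrite Ur_def exprNn -signr_odd /= oddX orbC Hodd /= expr0 mul1r.
by rewrite exprD expr1 (eqP (_ : Ar ^+ (p ^ f.-1) == 1)) ?mulr1 // Ar_ord.
Qed.

Definition Kx x := (1 + (1 + p ^ f.-1) * (x + (N - ph x)))%N.

Lemma UrK x : Ur ^+ Kx x = Ur * Ar ^+ (x + (N - ph x)).
Proof. by rewrite /Kx exprD expr1 exprM Ur_s. Qed.

Lemma skew_eq x b0 : (x < N)%N -> (b0 < N)%N ->
  ph ((x + b0) %% N)%N = ((ph x + iter (Kx x) ph b0) %% N)%N.
Proof.
move=> xN bN; apply: SrI; rewrite ?ltn_pmod ?(@N_gt0 f M hM) ?ph_lt //.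
rewrite phZ !Sr_mod !SrD phZ iter_ph UrK.
have eA : Ar ^+ ph x * Ar ^+ (x + (N - ph x)) = Ar ^+ x.
  rewrite -exprD (_ : (ph x + (x + (N - ph x)) = x + N)%N) ?exprD ?ArN ?mulr1 //.
  by have := ph_lt x; lia.
rewrite -eA; ring.
Qed.

Lemma is_skew_ph : Defs.is_skew N ph.
Proof.
split.
- exact: (@N_gt0 f M hM).
- by move=> x _; exact: ph_lt.
- move=> x y xN yN e; apply: SrI => //.
  by apply: (mulrI Ur_unit); rewrite -!phZ e.
- apply: SrI; rewrite ?ph_lt ?(@N_gt0 f M hM) //.
  by rewrite phZ Sa0 mulr0.
move=> x xN; exists (Kx x) => b0 bN; exact: skew_eq.
Qed.

Lemma allP_ph k : all (fun x => iter k ph x == x) (iota 0 N) = (Ur ^+ k == 1).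
Proof.
apply/allP/eqP.
  move=> /(_ 1); rewrite mem_iota N_gt1 => /(_ isT) /eqP e.
  by have := congr1 (fun z => (Sa z)%:R : R) e; rewrite /= iter_ph Sr1 mulr1.
move=> e x; rewrite mem_iota add0n => /andP[_ xN]; apply/eqP.
by apply: SrI; rewrite ?iter_ph_lt // iter_ph e mul1r.
Qed.

Lemma mm_le : (mm <= N)%N.
Proof.
have M0 : (0 < M)%N by have := N_gt0 0 hM; rewrite expn0 mul1n.
have e : (p ^ f = p * p ^ f.-1)%N by rewrite -expnS prednK.
have := p_gt1; rewrite /mm e; nia.
Qed.

Lemma skew_ord_ph : skew_ord N ph = mm.
Proof.
rewrite /skew_ord; apply: find_iota_exact.
- by rewrite ltnS (leq_trans mm_le) ?fact_geq.
- by rewrite allP_ph Ur_ord dvdnn ltnW ?mm_gt1.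
move=> k km; rewrite allP_ph Ur_ord; case: k km => //= k km.
by apply/negP => /(dvdn_leq (isT : (0 < k.+1)%N)); rewrite leqNgt km.
Qed.

Lemma is_id_ph : is_identity N ph = false.
Proof.
have := allP_ph 1; rewrite /is_identity /= => ->.
by rewrite Ur_ord dvdn1; apply/negP => /eqP e; have := mm_gt1; rewrite e.
Qed.

Lemma pi_ph x : (x < N)%N -> (skew_pi N ph x %% mm = Kx x %% mm)%N.
Proof.
move=> xN; rewrite /skew_pi is_id_ph skew_ord_ph.
apply: find_pi_mod; first by rewrite ltnW ?mm_gt1.
move=> i _; congr andb.
have -> : all (fun b => ph ((x + b) %% N)%N == ((ph x + iter i ph b) %% N)%N) (iota 0 N)
    = (Ur ^+ i == Ur ^+ Kx x).
  apply/allP/eqP.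
    move=> /(_ 1); rewrite mem_iota N_gt1 => /(_ isT) /eqP.
    rewrite skew_eq ?N_gt1 // => e1.
    have e2 : Sr ((ph x + iter (Kx x) ph 1) %% N)%N = Sr ((ph x + iter i ph 1) %% N)%N.
      by rewrite e1.
    move: e2; rewrite !Sr_mod !SrD => /addrI /(mulrI (unitrX _ Ar_unit)).
    by rewrite !iter_ph Sr1 !mulr1 => ->.
  move=> e b; rewrite mem_iota add0n => /andP[_ bN].
  rewrite skew_eq //; apply/eqP; congr modn; congr addn.
  by apply: SrI; rewrite ?iter_ph_lt // !iter_ph e.
apply/eqP/eqP => e.
  by apply: (expr_inj Ur_ord Ur_unit).
exact: expr_modeq Urm e.
Qed.

Definition psi j := skew_sigma N ph j (1 %% N)%N.

Lemma one_modN : (1 %% N = 1)%N.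
Proof. by rewrite modn_small ?N_gt1. Qed.

Lemma psi_lt j : (psi j < mm)%N.
Proof. by rewrite /psi /skew_sigma skew_ord_ph ltn_pmod // ltnW ?mm_gt1. Qed.

Lemma psi_rel j : Ur ^+ psi j * (1 + Br * Ur ^+ j) = Ar * Ur ^+ j.
Proof.
rewrite /psi /skew_sigma skew_ord_ph (expr_mod _ Urm) one_modN.
have T : forall j, Ur ^+ (\sum_(i < j) skew_pi N ph (iter i ph 1)) * Ar ^+ (iter j ph 1)
                  = Ur ^+ j * Ar.
  elim=> [|k IH]; first by rewrite big_ord0 !expr0 mul1r expr1.
  rewrite big_ord_recr /= exprD.
  set y := iter k ph 1.
  have yN : (y < N)%N by apply: iter_ph_lt; rewrite N_gt1.
  rewrite -[Ur ^+ skew_pi N ph y](expr_mod _ Urm) pi_ph // (expr_mod _ Urm) UrK.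
  have eA : Ar ^+ (y + (N - ph y)) * Ar ^+ ph y = Ar ^+ y.
    rewrite -exprD (_ : (y + (N - ph y) + ph y = y + N)%N) ?exprD ?ArN ?mulr1 //.
    by have := ph_lt y; lia.
  by rewrite -mulrA -mulrA eA mulrCA IH exprS mulrA.
have := T j; rewrite ArX iter_ph Sr1 mulr1 => ->; by rewrite mulrC.
Qed.

Lemma Uinj i j : (i < mm)%N -> (j < mm)%N -> Ur ^+ i = Ur ^+ j -> i = j.
Proof.
move=> im jm /(expr_inj Ur_ord Ur_unit); by rewrite !modn_small.
Qed.

Lemma psi_iter l j : Ur ^+ (iter l psi j) * (1 + Br * Sr l * Ur ^+ j) = Ar ^+ l * Ur ^+ j.
Proof.
elim: l => [|l IH]; first by rewrite /= Sa0 !mulr0 mul0r addr0 mulr1 expr0 mul1r.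
rewrite iterS; set J := iter l psi j.
set D := 1 + Br * Sr l * Ur ^+ j.
have e : 1 + Br * Sr l.+1 * Ur ^+ j = (1 + Br * Ur ^+ J) * D.
  transitivity (D + Br * (Ar ^+ l * Ur ^+ j)); first by rewrite SrS /D; ring.
  rewrite -IH /D; move: (Ur ^+ J) => X; ring.
by rewrite e mulrA psi_rel -mulrA IH exprS mulrA.
Qed.

Lemma iter_psi_lt l j : (j < mm)%N -> (iter l psi j < mm)%N.
Proof. by case: l => [|l] //= _; exact: psi_lt. Qed.

Lemma BrS_eq k : (Ar ^+ k == 1) = (Br * Sr k == 0).
Proof. by rewrite ArX -[X in _ == X](addr0 1) (inj_eq (addrI 1)). Qed.

Lemma allP_psi k : (0 < k)%N ->
  all (fun j => iter k psi j == j) (iota 0 mm) = (Ar ^+ k == 1).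
Proof.
move=> k0; apply/allP/idP.
  move=> /(_ 1); rewrite mem_iota mm_gt1 => /(_ isT) /eqP e.
  have := psi_iter k 1; rewrite e expr1 ArX => h.
  have h2 : Ur * (Br * Sr k * (1 + Ar)) = 0.
    transitivity ((1 + Br * Sr k) * Ur - Ur * (1 + Br * Sr k * Ur)).
      by rewrite Ur_def; ring.
    by rewrite h subrr.
  have := mulrI Ur_unit (etrans h2 (esym (mulr0 Ur))) => /L1 h3.
  by rewrite h3 addr0.
rewrite BrS_eq => /eqP h0 j; rewrite mem_iota add0n => /andP[_ jm].
apply/eqP; apply: Uinj; rewrite ?iter_psi_lt //.
by have := psi_iter k j; rewrite h0 mul0r addr0 mulr1 ArX h0 addr0 mul1r.
Qed.

Lemma ArN' : Ar ^+ (p ^ f.-1)%N = 1.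
Proof. by apply/eqP; rewrite Ar_ord. Qed.

Lemma skew_ord_psi : skew_ord mm psi = (p ^ f.-1)%N.
Proof.
have pg : (0 < p ^ f.-1)%N by rewrite expn_gt0 prime_gt0.
rewrite /skew_ord; apply: find_iota_exact.
- rewrite ltnS; apply: (@leq_trans mm); [rewrite /mm; lia | exact: fact_geq].
- by cbv beta; rewrite pg allP_psi // Ar_ord dvdnn.
move=> k km; cbv beta; case: k km => [|k] km //; rewrite allP_psi // Ar_ord.
by apply/negP => /(dvdn_leq (isT : (0 < k.+1)%N)); rewrite leqNgt km.
Qed.

Definition kap j := iter j ph 1.

Lemma Ar_kap j : Ar ^+ kap j = 1 + Br * Ur ^+ j.
Proof. by rewrite ArX iter_ph Sr1 mulr1. Qed.

Lemma BrS_kap j : Br * Sr (kap j) = Br * Ur ^+ j.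
Proof. by have := Ar_kap j; rewrite ArX => /addrI. Qed.

Lemma skew_eq_psi j j2 : (j < mm)%N -> (j2 < mm)%N ->
  psi ((j + j2) %% mm)%N = ((psi j + iter (kap j) psi j2) %% mm)%N.
Proof.
have m0 : (0 < mm)%N by rewrite ltnW ?mm_gt1.
move=> jm j2m; apply: Uinj; [exact: psi_lt | by rewrite ltn_pmod | ].
rewrite (expr_mod _ Urm) exprD.
set D := 1 + Br * Ur ^+ (j + j2).
apply: (mulIr (Br_unit (Ur ^+ (j + j2)))); rewrite -/D.
have hD : Ur ^+ ((j + j2) %% mm)%N = Ur ^+ (j + j2) by rewrite (expr_mod _ Urm).
have h1 : Ur ^+ psi ((j + j2) %% mm)%N * D = Ar * Ur ^+ (j + j2).
  by have := psi_rel ((j + j2) %% mm)%N; rewrite hD.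
have hY : Ur ^+ iter (kap j) psi j2 * D = (1 + Br * Ur ^+ j) * Ur ^+ j2.
  have := psi_iter (kap j) j2; rewrite BrS_kap Ar_kap -mulrA -exprD //.
rewrite h1 -mulrA hY mulrA psi_rel -mulrA -exprD //.
Qed.

Lemma pi_psi j : (j < mm)%N -> (skew_pi mm psi j %% p ^ f.-1 = kap j %% p ^ f.-1)%N.
Proof.
move=> jm; have m0 : (0 < mm)%N by rewrite ltnW ?mm_gt1.
have pg : (0 < p ^ f.-1)%N by rewrite expn_gt0 prime_gt0.
rewrite /skew_pi skew_ord_psi; case: ifP => isid.
  have : all (fun x => iter 1 psi x == x) (iota 0 mm) by [].
  rewrite allP_psi // Ar_ord dvdn1 => /eqP ->; by rewrite !modn1.
apply: find_pi_mod => // i _; congr andb.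
have -> : all (fun b => psi ((j + b) %% mm)%N == ((psi j + iter i psi b) %% mm)%N) (iota 0 mm)
    = (Ar ^+ i == Ar ^+ kap j).
  apply/allP/eqP.
    move=> /(_ 1); rewrite mem_iota mm_gt1 => /(_ isT) /eqP.
    rewrite skew_eq_psi ?mm_gt1 // => e1.
    have e2 : Ur ^+ ((psi j + iter (kap j) psi 1) %% mm)%N
            = Ur ^+ ((psi j + iter i psi 1) %% mm)%N by rewrite e1.
    move: e2; rewrite !(expr_mod _ Urm) !exprD => /(mulrI (unitrX _ Ur_unit)) eZ.
    have hi := psi_iter i 1; have hk := psi_iter (kap j) 1.
    rewrite expr1 -eZ in hi; rewrite expr1 in hk.
    move: (Ur ^+ iter (kap j) psi 1) hi hk => Z hi hk.
    rewrite !ArX in hi hk *.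
    have e3 : (1 + Br * Sr i) * Ur * (1 + Br * Sr (kap j) * Ur)
            = (1 + Br * Sr (kap j)) * Ur * (1 + Br * Sr i * Ur).
      by rewrite -hi -hk; ring.
    have e4 : - Ar * (Br * (Sr i - Sr (kap j)) * (1 + Ar)) = 0.
      transitivity ((1 + Br * Sr i) * Ur * (1 + Br * Sr (kap j) * Ur)
            - (1 + Br * Sr (kap j)) * Ur * (1 + Br * Sr i * Ur)).
        by rewrite Ur_def; ring.
      by rewrite e3 subrr.
    have uA : - Ar \is a GRing.unit by rewrite unitrN Ar_unit.
    have := mulrI uA (etrans e4 (esym (mulr0 _))) => /L1 /eqP.
    by rewrite mulrBr subr_eq0 => /eqP ->.
  move=> e b; rewrite mem_iota add0n => /andP[_ bm].
  rewrite skew_eq_psi //; apply/eqP; congr modn; congr addn.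
  apply: Uinj; rewrite ?iter_psi_lt //.
  have hi := psi_iter i b; have hk := psi_iter (kap j) b.
  have eB : Br * Sr i = Br * Sr (kap j) by move: e; rewrite !ArX => /addrI.
  rewrite eB in hi; rewrite -e in hk.
  apply: (mulIr (Br_unit (Sr (kap j) * Ur ^+ b))).
  by rewrite !mulrA hk -hi.
apply/eqP/eqP => e.
  by apply: (expr_inj Ar_ord Ar_unit).
exact: expr_modeq ArN' e.
Qed.

Definition psi2 i := skew_sigma mm psi i (1 %% mm)%N.

Lemma psi2_lt i : (psi2 i < p ^ f.-1)%N.
Proof. by rewrite /psi2 /skew_sigma skew_ord_psi ltn_pmod // expn_gt0 prime_gt0. Qed.

Lemma psi2_rel i : Ar ^+ psi2 i = 1 + Br * Sr i * Ur.
Proof.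
have m1 : (1 %% mm = 1)%N by rewrite modn_small ?mm_gt1.
rewrite /psi2 /skew_sigma skew_ord_psi (expr_mod _ ArN') m1.
elim: i => [|i IH]; first by rewrite big_ord0 expr0 Sa0 !mulr0 mul0r addr0.
rewrite big_ord_recr /= exprD IH.
set y := iter i psi 1.
have ym : (y < mm)%N by apply: iter_psi_lt; rewrite mm_gt1.
rewrite -[Ar ^+ skew_pi mm psi y](expr_mod _ ArN') pi_psi // (expr_mod _ ArN') Ar_kap.
have hy := psi_iter i 1; rewrite expr1 -/y in hy.
move: (Ur ^+ y) hy => Z hy.
rewrite SrS.
transitivity ((1 + Br * Sr i * Ur) + Br * (Z * (1 + Br * Sr i * Ur))).
  ring.
by rewrite hy; ring.
Qed.

Lemma modb x y : (bb * x = bb * y %[mod N])%N -> (x = y %[mod p ^ f.-1])%N.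
Proof.
wlog le : x y / (y <= x)%N.
  move=> W e; have [yx|xy] := leqP y x; first exact: W.
  by symmetry; apply: W; [apply: ltnW | symmetry].
move=> /eqP; rewrite eqn_mod_dvd ?leq_mul2l ?le ?orbT // -mulnBr Ndvd_b => d.
by apply/eqP; rewrite eqn_mod_dvd.
Qed.

Lemma psi2_phi i : (i < p ^ f.-1)%N ->
  psi2 i = phi (p ^ f.-1 * 1) (uu f.-1 1) i.
Proof.
move=> iN.
have [lt1 e1] := @phiP f.-1 1 (uu f.-1 1) i (dvd1n c).
rewrite muln1 in lt1 e1.
apply: (@Inj f.-1 1); rewrite ?muln1 ?psi2_lt ?dvd1n //.
rewrite e1.
have h := psi2_rel i; rewrite ArX in h; move/addrI: h => /eqP.
rewrite -!natrM natZ -mulnA => /eqP hh; rewrite (modb hh).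
have pg : (0 < p ^ f.-1)%N by rewrite expn_gt0 prime_gt0.
have Ng : (0 < N)%N by exact: (@N_gt0 f M hM).
have h : (N.-1 = (p ^ f.-1 * 1).-1 %[mod p ^ f.-1])%N.
  apply/eqP; rewrite -(eqn_modDr 1) !addn1 (prednK Ng) muln1 (prednK pg).
  rewrite modnn -{1}(prednK hf) expnS.
  by rewrite mulnAC modnMl.
by rewrite mulnC /uu -!mulnA -modnMml h modnMml.
Qed.

End Lev.

Definition G f M := (p ^ f * M, phi (p ^ f * M) (uu f M)).

Lemma der1 f M : M %| c -> 0 < f -> derived (G f M) = (mm f, psi f M).
Proof. move=> hM hf; rewrite /derived /G; cbn [fst snd]; by rewrite skew_ord_ph. Qed.

Lemma der2 f M : M %| c -> 0 < f -> derived (mm f, psi f M) = (p ^ f.-1, psi2 f M).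
Proof. move=> hM hf; rewrite /derived; cbn [fst snd]; by rewrite skew_ord_psi. Qed.

Lemma der3 f M : M %| c -> 0 < f ->
  derived (p ^ f.-1, psi2 f M) = derived (G f.-1 1).
Proof.
move=> hM hf; rewrite /G muln1; apply: derived_eq_in.
  by move=> x xN; rewrite (psi2_phi hM hf xN) muln1.
by move=> x _; exact: psi2_lt.
Qed.

Lemma chain f : 0 < f -> forall M, M %| c ->
  (iter (2 * f).-1 derived (G f M)).1 = 2 /\ (iter (2 * f) derived (G f M)).1 = 1.
Proof.
elim: f => [//|f IH] _ M hM.
case: f IH => [|f] IH.
  rewrite (_ : (2 * 1).-1 = 1) // (_ : 2 * 1 = 2) //.
  change ((derived (G 1 M)).1 = 2 /\ (derived (derived (G 1 M))).1 = 1).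
  rewrite der1 //; split; first by rewrite /mm expn0 muln1.
  by rewrite der2 //; cbn [fst]; rewrite expn0.
have e1 : (2 * f.+2).-1 = (2 * f).+3 by rewrite !mulnS.
have e2 : 2 * f.+2 = (2 * f).+1.+3 by rewrite !mulnS.
have E : forall k, iter k.+3 derived (G f.+2 M) = iter k.+1 derived (G f.+1 1).
  move=> k; rewrite !iterSr der1 // der2 // der3 //.
have [IH1 IH2] := IH isT 1 (dvd1n c).
rewrite e1 e2 !E; split.
  by move: IH1; rewrite (_ : (2 * f.+1).-1 = (2 * f).+1) // mulnS.
by move: IH2; rewrite (_ : 2 * f.+1 = (2 * f).+2) // mulnS.
Qed.

End Fam.

Theorem corollary6p4 (n p : nat) :
  2 <= n ->
  (forall c, Comp n c -> c <= 3) ->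
  prime p -> odd p ->
  ~~ (p ^ 3 %| n).
Proof.
move=> n2 H pp op; apply/negP => d.
have n0 : 0 < n by apply: ltnW.
have [M cpM eN] := pfactor_coprime pp n0.
set e := logn p n in eN.
have e3 : 3 <= e by rewrite -pfactor_dvdn.
have e0 : 0 < e by apply: leq_trans e3.
have nE : n = p ^ e * M by rewrite {1}eN mulnC.
have C : Comp n (2 * e).-1.
  exists (phi p M n (uu p M e M)); split.
    rewrite nE; exact: (is_skew_ph pp op cpM (dvdnn M) e0).
  have [h1 h2] := chain pp op cpM e0 (dvdnn M).
  rewrite /is_complexity nE; split.
    by move: h1; rewrite /G => ->.
  by rewrite prednK ?muln_gt0 ?e0 //; move: h2; rewrite /G.
have := H _ C; lia.
Qed.
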